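(* Let $F$ be a finite-dimensional subspace of $c_0$. Then there exists $k\in\mathbb N$ such that $F$ has property-$(k-U)$ in $c_0$.
   Context: $c_0$ carries the sup norm. For a closed subspace $Y$ of $X$ and $y^*\in Y^*$, $HB(y^* )=\{x^*\in X^*:x^*|_Y=y^*,\ \|x^*\|=\|y^*\|\}$; for a set $A$ and $a\in A$, $\dim A=\dim\operatorname{span}(A-a)$. $Y$ has property-$(k-U)$ in $X$ if $\dim HB(y^* )\le k-1$ for all $y^*\in S_{Y^*}$. *)

(* Defs.v *)
From mathcomp Require Import all_boot all_order all_algebra.
From mathcomp Require Import all_classical all_reals all_analysis.
Set Implicit Arguments. Unset Strict Implicit. Unset Printing Implicit Defensive.
Import Order.TTheory GRing.Theory Num.Theory.
Local Open Scope classical_set_scope.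
Local Open Scope ring_scope.
Import numFieldNormedType.Exports.

Section C0.
Variable R : realType.

Definition in_c0 (x : nat -> R) : Prop := x n @[n --> \oo] --> (0 : R).

Definition supnorm (x : nat -> R) : R := sup (range (fun n => `|x n|)).

(* A functional is represented by a map (nat -> R) -> R; only its values on
   the relevant subspace S matter. *)
Definition lin_on (S : set (nat -> R)) (f : (nat -> R) -> R) : Prop :=
  forall x y, S x -> S y -> forall a b : R,
    f (fun n => a * x n + b * y n) = a * f x + b * f y.

Definition bounded_on (S : set (nat -> R)) (f : (nat -> R) -> R) : Prop :=
  exists M : R, forall x, S x -> `|f x| <= M * supnorm x.

Definition in_dual (S : set (nat -> R)) (f : (nat -> R) -> R) : Prop :=
  lin_on S f /\ bounded_on S f.

Definition dual_norm (S : set (nat -> R)) (f : (nat -> R) -> R) : R :=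
  sup [set `|f x| | x in [set x | S x /\ supnorm x <= 1]].

Definition fin_dim_subspace_c0 (Y : set (nat -> R)) : Prop :=
  exists (n : nat) (e : 'I_n -> nat -> R),
    (forall i, in_c0 (e i)) /\
    Y = [set x | exists c : 'I_n -> R, x = (fun m => \sum_(i < n) c i * e i m)].

Definition HBset (Y : set (nat -> R)) (g : (nat -> R) -> R) : set ((nat -> R) -> R) :=
  [set f | in_dual in_c0 f /\ (forall y, Y y -> f y = g y) /\
           dual_norm in_c0 f = dual_norm Y g].

(* dim A <= d  (A a set of functionals on c_0): for a in A, span(A - a) has
   dimension <= d in the dual, i.e. is spanned by d elements of the dual of c_0
   (equality of functionals = equality on c_0). *)
Definition dim_le (A : set ((nat -> R) -> R)) (d : nat) : Prop :=
  forall a, A a -> exists g : 'I_d -> (nat -> R) -> R,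
    (forall i, in_dual in_c0 (g i)) /\
    forall f, A f -> exists c : 'I_d -> R,
      forall x, in_c0 x -> f x - a x = \sum_(i < d) c i * g i x.

Definition prop_kU (Y : set (nat -> R)) (k : nat) : Prop :=
  forall g, in_dual Y g -> dual_norm Y g = 1 -> dim_le (HBset Y g) (k - 1)%N.

End C0.

(* Main.v *)
Require Import Defs.
From mathcomp Require Import all_boot all_order all_algebra.
From mathcomp Require Import all_classical all_reals all_analysis.
From mathcomp Require Import ring lra.
Set Implicit Arguments. Unset Strict Implicit. Unset Printing Implicit Defensive.
Import Order.TTheory GRing.Theory Num.Theory.
Local Open Scope classical_set_scope.
Local Open Scope ring_scope.
Import numFieldNormedType.Exports.

Lemma c0_lin (R : realType) (x y : nat -> R) (a b : R) :
  in_c0 x -> in_c0 y -> in_c0 (fun m => a * x m + b * y m).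
Proof.
rewrite /in_c0 => hx hy.
have h1 : (fun n => a * x n) @ \oo --> a * 0 by apply: cvgMl_tmp.
have h2 : (fun n => b * y n) @ \oo --> b * 0 by apply: cvgMl_tmp.
have := cvgD h1 h2.
rewrite !mulr0 addr0; exact.
Qed.

Lemma c0_cst0 (R : realType) : in_c0 (fun _ : nat => (0:R)).
Proof. exact: cvg_cst. Qed.

Definition interp (R : realType) (L : seq (nat * (nat -> R))) (y : nat -> R) (m : nat) : R :=
  \sum_(p <- L) y p.1 * p.2 m.
Definition c0L (R : realType) (L : seq (nat * (nat -> R))) := forall p, List.In p L -> in_c0 p.2.

Lemma interp_c0 (R : realType) L (y : nat -> R) : c0L L -> in_c0 (interp L y).
Proof.
elim: L => [|p L IH] hL.
  have -> : interp [::] y = (fun _ => 0).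
    by apply: funext => m; rewrite /interp big_nil.
  exact: c0_cst0.
have -> : interp (p :: L) y = (fun m => y p.1 * p.2 m + 1 * interp L y m).
  by apply: funext => m; rewrite /interp big_cons mul1r.
apply: c0_lin; first by apply: hL; left.
by apply: IH => q hq; apply: hL; right.
Qed.

Lemma interp_lin (R : realType) L (y z : nat -> R) a b m :
  interp L (fun n => a * y n + b * z n) m = a * interp L y m + b * interp L z m.
Proof.
rewrite /interp !mulr_sumr -big_split /=; apply: eq_bigr => p _; ring.
Qed.

Lemma step (R : realType) (P : (nat -> R) -> Prop) L (v : nat -> R) :
  c0L L -> in_c0 v -> (forall y, P y -> forall m, y m = interp L y m) ->
  exists L', c0L L' /\ forall y (l : R), P y -> forall m,
    y m + l * v m = interp L' (fun n => y n + l * v n) m.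
Proof.
move=> hL hv HP.
pose r := fun m => v m - interp L v m.
have hr : in_c0 r.
  have -> : r = (fun m => 1 * v m + (-1) * interp L v m).
    by apply: funext => m; rewrite /r; ring.
  by apply: c0_lin => //; apply: interp_c0.
have lin1 : forall y l m, interp L (fun n => y n + l * v n) m = interp L y m + l * interp L v m.
  move=> y l m.
  have -> : (fun n => y n + l * v n) = (fun n => 1 * y n + l * v n).
    by apply: funext => n; rewrite mul1r.
  by rewrite interp_lin mul1r.
case: (pselect (exists p, r p != 0)) => [[p rp]|hno].
- pose L' := (p, fun m => r m / r p) ::
      map (fun q : nat * (nat -> R) => (q.1, fun m => q.2 m - q.2 p / r p * r m)) L.
  exists L'; split.
    move=> q [<-|].
      have -> : (fun m => r m / r p) = (fun m => (r p)^-1 * r m + 0 * r m).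
        by apply: funext => m; rewrite mul0r addr0 mulrC.
      exact: c0_lin.
    move=> /List.in_map_iff [q0 [<- hq0]] /=.
    have -> : (fun m => q0.2 m - q0.2 p / r p * r m) = (fun m => 1 * q0.2 m + (- (q0.2 p / r p)) * r m).
      by apply: funext => m; ring.
    by apply: c0_lin => //; apply: hL.
  move=> y l Py m.
  set w := fun n => y n + l * v n.
  have key : forall n, interp L w n = w n - l * r n.
    move=> n; rewrite /w lin1 -HP // /r; ring.
  rewrite /interp /L' big_cons big_map /=.
  have -> : \sum_(j <- L) w j.1 * (j.2 m - j.2 p / r p * r m)
      = interp L w m - interp L w p / r p * r m.
    rewrite /interp !mulr_suml -sumrB; apply: eq_bigr => q _; ring.
  rewrite !key -/(w m); field; exact: rp.
- exists L; split => // y l Py m.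
  rewrite lin1 -HP //.
  have : r m = 0 by apply/eqP; apply: contra_notT hno => h; exists m.
  rewrite /r => /eqP; rewrite subr_eq0 => /eqP <-; by [].
Qed.

Lemma interp_exists (R : realType) n (e : 'I_n -> nat -> R) : (forall i, in_c0 (e i)) ->
  exists L, c0L L /\ forall (c : 'I_n -> R) m,
    \sum_(i < n) c i * e i m = interp L (fun k => \sum_(i < n) c i * e i k) m.
Proof.
elim: n e => [|n IH] e he.
  exists [::]; split; first by move=> ? [].
  by move=> c m; rewrite /interp big_nil big_ord0.
have [L [hL HL]] := IH (fun i => e (widen_ord (leqnSn n) i)) (fun i => he _).
pose P := fun y => exists c : 'I_n -> R,
   y = fun k => \sum_(i < n) c i * e (widen_ord (leqnSn n) i) k.
have HP : forall y, P y -> forall m, y m = interp L y m.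
  by move=> y [c' ->]; apply: HL.
have [L' [hL' HL']] := step hL (he ord_max) HP.
exists L'; split => // c m.
have E : (fun k => \sum_(i < n.+1) c i * e i k) = fun k =>
   (\sum_(i < n) c (widen_ord (leqnSn n) i) * e (widen_ord (leqnSn n) i) k)
     + c ord_max * e ord_max k.
  by apply: funext => k; rewrite big_ord_recr.
rewrite E big_ord_recr /=; apply: HL'.
by exists (fun i => c (widen_ord (leqnSn n) i)).
Qed.

Lemma c0P (R : realType) (x : nat -> R) :
  in_c0 x <-> forall e : R, 0 < e -> exists N, forall n, (N <= n)%N -> `|x n| <= e.
Proof.
rewrite /in_c0; split.
- move=> /cvgrPdist_le H e e0; have := H e e0.
  move=> [N _ HN]; exists N => n Nn; have := HN n Nn.
  by rewrite sub0r normrN.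
- move=> H; apply/cvgrPdist_le => e e0; have [N HN] := H e e0.
  apply: filterS (nbhs_infty_ge N) => n Nn; rewrite sub0r normrN; exact: HN.
Qed.

Lemma c0_bounded (R : realType) (x : nat -> R) : in_c0 x -> exists M, forall n, `|x n| <= M.
Proof.
move=> hx; have : cvgn x by apply/cvg_ex; exists 0.
move=> /cvg_seq_bounded [M [_ HM]].
exists (M + 1) => n; apply: (HM (M+1)); first by rewrite ltrDl.
by [].
Qed.

Lemma sn_ge (R : realType) (x : nat -> R) n : in_c0 x -> `|x n| <= supnorm x.
Proof.
move=> /c0_bounded [M HM]; apply: sup_upper_bound; last by exists n.
split; first by exists `|x 0%N|, 0%N.
by exists M => _ [m _ <-].
Qed.

Lemma sn_ge0 (R : realType) (x : nat -> R) : in_c0 x -> 0 <= supnorm x.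
Proof. by move=> hx; apply: le_trans (sn_ge 0%N hx). Qed.

Lemma sn_le (R : realType) (x : nat -> R) b : (forall n, `|x n| <= b) -> supnorm x <= b.
Proof.
move=> H; apply: ge_sup; first by exists `|x 0%N|, 0%N.
by move=> _ [m _ <-].
Qed.

Lemma c0_abs (R : realType) (x : nat -> R) : in_c0 x -> in_c0 (fun m => `|x m|).
Proof.
move=> /c0P H; apply/c0P => e e0; have [N HN] := H e e0.
by exists N => n hn; rewrite normr_id; apply: HN.
Qed.

Definition delta (R : realType) (i : nat) : nat -> R := fun m => if m == i then 1 else 0.
Definition tail (R : realType) (K : nat) (x : nat -> R) : nat -> R :=
  fun m => if (m < K)%N then 0 else x m.

Lemma c0_delta (R : realType) i : in_c0 (delta R i).
Proof.
apply/c0P => e e0; exists i.+1 => n hn; rewrite /delta.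
have -> : (n == i) = false by apply/negbTE; rewrite neq_ltn hn orbT.
by rewrite normr0 ltW.
Qed.

Lemma c0_tail (R : realType) K (x : nat -> R) : in_c0 x -> in_c0 (tail K x).
Proof.
move=> /c0P H; apply/c0P => e e0; have [N HN] := H e e0.
exists N => n hn; rewrite /tail; case: ifP => _; last exact: HN.
by rewrite normr0 ltW.
Qed.

Lemma lin_scale (R : realType) (phi : (nat -> R) -> R) x c :
  lin_on (@in_c0 R) phi -> in_c0 x -> phi (fun n => c * x n) = c * phi x.
Proof.
move=> hl hx.
have -> : (fun n => c * x n) = (fun n => c * x n + 0 * x n).
  by apply: funext => n; rewrite mul0r addr0.
by rewrite hl // mul0r addr0.
Qed.

Lemma decomp (R : realType) (phi : (nat -> R) -> R) K x :
  lin_on (@in_c0 R) phi -> in_c0 x ->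
  phi x = \sum_(i < K) phi (delta R i) * x i + phi (tail K x).
Proof.
move=> hl hx; elim: K => [|K IH].
  rewrite big_ord0 add0r; congr phi; apply: funext => m; by rewrite /tail.
have E : tail K x = fun m => x K * delta R K m + 1 * tail K.+1 x m.
  apply: funext => m; rewrite /tail /delta ltnS.
  by case: (ltngtP m K) => h; rewrite ?h /= ?mulr0 ?mulr1 ?mul1r ?add0r ?addr0.
rewrite IH E hl //; last by apply: c0_tail.
  by rewrite big_ord_recr /= mul1r addrA [x K * _]mulrC.
exact: c0_delta.
Qed.

Lemma abs_sum (R : realType) (a b : R) : `|a + b| <= 1 -> `|a - b| <= 1 -> `|a| + `|b| <= 1.
Proof.
rewrite !ler_norml.
have [ha|ha] := lerP 0 a; have [hb|hb] := lerP 0 b;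
rewrite ?(ger0_norm ha) ?(ltr0_norm ha) ?(ger0_norm hb) ?(ltr0_norm hb);
move=> /andP[? ?] /andP[? ?]; lra.
Qed.

Theorem theorem4p14 (R : realType) (F : set (nat -> R)) :
  fin_dim_subspace_c0 F -> exists k : nat, prop_kU F k.
Proof.
move=> [n [e [he HF]]].
have [L [hL HL]] := interp_exists he.
pose beta := fun m => \sum_(p <- L) `|p.2 m|.
have beta0 : forall m, 0 <= beta m by move=> m; apply: sumr_ge0 => p _.
have [K HK] : exists K, forall m, (K <= m)%N -> beta m <= 1/2.
  pose L' := map (fun p : nat * (nat -> R) => (p.1, fun m => `|p.2 m|)) L.
  have hL' : c0L L'.
    move=> q /List.in_map_iff [q0 [<- hq0]] /=; apply: c0_abs; exact: hL.
  have hb : in_c0 beta.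
    have -> : beta = interp L' (fun _ => 1).
      by apply: funext => m; rewrite /interp big_map; apply: eq_bigr => p _; rewrite mul1r.
    exact: interp_c0.
  move/c0P: hb => /(_ (1/2)) [//|N HN]; exists N => m hm.
  by apply: le_trans (HN m hm); apply: ler_norm.
have Fform : forall y, F y -> in_c0 y /\ forall m, `|y m| <= supnorm y * beta m.
  move=> y; rewrite HF => -[c Ec].
  have Hy0 : forall m, y m = interp L y m by move=> m; rewrite Ec; apply: HL.
  have Ey : y = interp L y by apply: funext => m; apply: Hy0.
  have cy : in_c0 y by rewrite Ey; apply: interp_c0.
  split => // m.
  rewrite Hy0.
  rewrite /interp /beta mulr_sumr.
  apply: le_trans (ler_norm_sum _ _ _) _; apply: ler_sum => p _.
  by rewrite normrM ler_wpM2r // sn_ge.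
pose x0 := fun k => \sum_(i < n) 0 * e i k.
have Fx0 : F x0 by rewrite HF; exists (fun _ => 0).
have x00 : forall m, x0 m = 0 by move=> m; rewrite /x0 big1 // => i _; rewrite mul0r.
exists K.+1 => g [glin [Mg gbd]] gn.
rewrite subn1 /=.
have gapprox : forall eps : R, 0 < eps ->
    exists x, [/\ F x, supnorm x <= 1 & 1 - eps < `|g x|].
  move=> eps eps0.
  have hs : has_sup [set `|g x| | x in [set x | F x /\ supnorm x <= 1]].
    split; first by exists `|g x0|, x0; split => //; apply: sn_le => m; rewrite x00 normr0.
    exists `|Mg| => _ [x [Fx sx] <-].
    have s0 : 0 <= supnorm x by apply: sn_ge0; exact: (Fform x Fx).1.
    apply: le_trans (gbd x Fx) _.
    have : Mg <= `|Mg| by apply: ler_norm.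
    have : 0 <= `|Mg| by [].
    nra.
  have [_ [x [Fx sx] <-] hx] := sup_adherent eps0 hs.
  by exists x; split => //; rewrite -gn.
have vanish : forall f, HBset F g f -> forall z, in_c0 z -> (forall m, (m < K)%N -> z m = 0) -> f z = 0.
  move=> f [[flin [Mf fbd]] [fg fn]].
  have fle : forall w, in_c0 w -> (forall m, `|w m| <= 1) -> `|f w| <= 1.
    move=> w cw hw; rewrite -gn -fn.
    apply: sup_upper_bound; last by exists w => //; split => //; apply: sn_le.
    split; first by exists `|f w|, w => //; split => //; apply: sn_le.
    exists `|Mf| => _ [x [cx sx] <-].
    have s0 : 0 <= supnorm x by apply: sn_ge0.
    apply: le_trans (fbd x cx) _.
    have : Mf <= `|Mf| by apply: ler_norm.
    have : 0 <= `|Mf| by [].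
    nra.
  have core : forall u, in_c0 u -> (forall m, (m < K)%N -> u m = 0) ->
      (forall m, `|u m| <= 1/2) -> f u = 0.
    move=> u cu u0 uh.
    case: (eqVneq (f u) 0) => // hne.
    have fu0 : 0 < `|f u| by rewrite normr_gt0.
    have [x [Fx sx hx]] := gapprox `|f u| fu0.
    have [cx bx] := Fform x Fx.
    have wb : forall s : R, `|s| = 1 -> forall m, `|1 * x m + s * u m| <= 1.
      move=> s hs m; apply: le_trans (ler_normD _ _) _.
      rewrite !normrM hs normr1 !mul1r.
      have s0 : 0 <= supnorm x by apply: sn_ge0.
      case: (ltnP m K) => hm.
        by rewrite u0 // normr0 addr0; apply: le_trans (sn_ge m cx) sx.
      have := bx m; have := HK m hm; have := beta0 m; have := uh m; nra.
    have h1 := fle _ (c0_lin 1 1 cx cu) (wb 1 (normr1 _)).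
    have h2 := fle _ (c0_lin 1 (-1) cx cu) (wb (-1) ltac:(by rewrite normrN normr1)).
    rewrite flin // in h1; rewrite flin // in h2.
    rewrite (fg x Fx) in h1 h2.
    have := abs_sum (a := g x) (b := f u).
    rewrite !mul1r mulN1r in h1 h2.
    move=> /(_ h1 h2); lra.
  move=> z cz z0.
  set s := supnorm z.
  have s0 : 0 <= s by apply: sn_ge0.
  set c := (2 * (s + 1))^-1.
  have hpos : 0 < 2 * (s + 1) by apply: mulr_gt0 => //; apply: ltr_wpDl s0 _.
  have cpos : 0 < c by rewrite invr_gt0.
  have hc : c * (2 * (s + 1)) = 1 by rewrite mulVf // lt0r_neq0.
  have cz' : in_c0 (fun m => c * z m).
    have -> : (fun m => c * z m) = (fun m => c * z m + 0 * z m).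
      by apply: funext => m; rewrite mul0r addr0.
    exact: c0_lin.
  have cu0 : forall m, (m < K)%N -> c * z m = 0 by move=> m hm; rewrite z0 // mulr0.
  have cub : forall m, `|c * z m| <= 1/2.
    move=> m; rewrite normrM (gtr0_norm cpos).
    have := sn_ge m cz; rewrite -/s; nra.
  have := core _ cz' cu0 cub; rewrite lin_scale // => H.
  by move/eqP: H; rewrite mulf_eq0 (gt_eqF cpos) /= => /eqP.
move=> a Ha.
exists (fun i : 'I_K => fun x : nat -> R => x i); split.
  move=> i; split; first by move=> x y _ _ a' b'.
  by exists 1 => x hx; rewrite mul1r; apply: sn_ge.
move=> f Hf; exists (fun i : 'I_K => f (delta R i) - a (delta R i)) => x hx.
have alin := Ha.1.1; have flin := Hf.1.1.
rewrite (decomp K alin hx) (decomp K flin hx).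
rewrite (vanish f Hf) ?(vanish a Ha); try exact: c0_tail.
  rewrite !addr0 -sumrB; apply: eq_bigr => i _; ring.
all: by move=> m hm; rewrite /tail hm.
Qed.
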